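(* Let $Y$ be a normed linear space, $F\subset\mathbb R^n$ and $x\in F\cap\operatorname{der}F$. If $f\colon F\to Y$ is relatively strictly differentiable at $x$ and $\operatorname{Ptg}(F,x)$ spans $\mathbb R^n$, then the relative strict derivative of $f$ at $x$ is determined uniquely.
   Context: $\operatorname{der}F$ is the set of accumulation points of $F$. $\operatorname{Ptg}(F,x)$ is the set of $v\in\mathbb R^n$ for which there are $x_k,y_k\in F$, $\alpha_k\in\mathbb R$ with $x_k\to x$, $y_k\to x$, $\alpha_k(y_k-x_k)\to v$. $L\in\mathcal L(\mathbb R^n,Y)$ is a relative strict derivative of $f$ at $x$ if $x$ is isolated in $F$ or $\|f(y)-f(z)-L(y-z)\|/|y-z|\to0$ as $y,z\to x$, $y,z\in F$, $y\ne z$ (with $y=x$ or $z=x$ allowed); $f$ is relatively strictly differentiable at $x$ if such $L$ exists. *)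

(* Defs.v *)
From HB Require Import structures.
From mathcomp Require Import all_boot all_order all_algebra.
From mathcomp Require Import all_classical all_reals all_analysis.
Set Implicit Arguments. Unset Strict Implicit. Unset Printing Implicit Defensive.
Import Order.TTheory GRing.Theory Num.Theory.
Import numFieldNormedType.Exports.
Local Open Scope classical_set_scope.
Local Open Scope ring_scope.

Definition der {R : realType} {n : nat} (F : set 'rV[R]_n) : set 'rV[R]_n :=
  limit_point F.

Definition Ptg {R : realType} {n : nat} (F : set 'rV[R]_n) (x : 'rV[R]_n)
  : set 'rV[R]_n :=
  [set v | exists (xs ys : nat -> 'rV[R]_n) (a : nat -> R),
     [/\ forall k, F (xs k), forall k, F (ys k),
         xs @ \oo --> x, ys @ \oo --> x &
         (fun k => a k *: (ys k - xs k)) @ \oo --> v]].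

Definition spans {R : realType} {n : nat} (S : set 'rV[R]_n) : Prop :=
  forall w : 'rV[R]_n, exists (m : nat) (c : 'I_m -> R) (v : 'I_m -> 'rV[R]_n),
    (forall i, S (v i)) /\ w = \sum_(i < m) c i *: v i.

Definition rel_strict_deriv {R : realType} {n : nat} {Y : normedModType R}
  (F : set 'rV[R]_n) (f : 'rV[R]_n -> Y) (x : 'rV[R]_n)
  (L : {linear 'rV[R]_n -> Y}) : Prop :=
  ~ der F x \/
  forall e : R, 0 < e -> exists2 d : R, 0 < d &
    forall y z, F y -> F z -> y != z -> `|y - x| < d -> `|z - x| < d ->
      `|f y - f z - L (y - z)| / `|y - z| < e.

(* Main.v *)
Require Import Defs.
From HB Require Import structures.
From mathcomp Require Import all_boot all_order all_algebra.
From mathcomp Require Import all_classical all_reals all_analysis.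
From mathcomp Require Import lra.
Import Order.TTheory GRing.Theory Num.Theory.
Import numFieldNormedType.Exports.
Local Open Scope classical_set_scope.
Local Open Scope ring_scope.

Lemma entry_le (R : realType) (n : nat) (u : 'rV[R]_n) (j : 'I_n) :
  `|u 0 j| <= `|u|.
Proof.
have /mapP[k Hk ->] : `|u 0 j| \in [seq `|u x.1 x.2| | x : 'I_1 * 'I_n].
  by apply/mapP; exists (ord0, j) => //=; rewrite mem_enum.
by rewrite [leRHS]/Num.norm /= mx_normrE; apply/bigmax_geP; right => /=; exists k.
Qed.

Lemma lin_lip (R : realType) (n : nat) (Y : normedModType R)
  (L1 L2 : {linear 'rV[R]_n -> Y}) :
  exists2 C : R, 0 <= C & forall u w,
    `|(L1 u - L2 u) - (L1 w - L2 w)| <= C * `|u - w|.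
Proof.
exists (\sum_(j < n) `|L1 (delta_mx 0 j) - L2 (delta_mx 0 j)|).
  by apply: sumr_ge0 => j _.
move=> u w.
have -> : (L1 u - L2 u) - (L1 w - L2 w) = L1 (u - w) - L2 (u - w).
  by rewrite !linearB /= addrACA.
set d := u - w; rewrite {1 2}(row_sum_delta d) !linear_sum /= -big_split /=.
rewrite mulr_suml; apply: le_trans (ler_norm_sum _ _ _) _.
apply: ler_sum => j _; rewrite !linearZ /= ?scalerN -?scalerBr -?scalerDr normrZ mulrC.
by apply: ler_wpM2l => //; exact: entry_le.
Qed.
Lemma key (R : realType) (n : nat) (Y : normedModType R)
  (F : set 'rV[R]_n) (x : 'rV[R]_n) (f : 'rV[R]_n -> Y)
  (L1 L2 : {linear 'rV[R]_n -> Y}) :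
  der F x -> rel_strict_deriv F f x L1 -> rel_strict_deriv F f x L2 ->
  forall e : R, 0 < e -> exists2 d : R, 0 < d & forall y z, F y -> F z ->
   `|y - x| < d -> `|z - x| < d ->
   `|L1 (y - z) - L2 (y - z)| <= e * `|y - z|.
Proof.
move=> dx [//|H1] [//|H2] e e0.
have e20 : 0 < e / 2 by rewrite divr_gt0.
have [d1 d10 Hd1] := H1 _ e20.
have [d2 d20 Hd2] := H2 _ e20.
exists (Num.min d1 d2); first by rewrite lt_min d10 d20.
move=> y z Fy Fz; rewrite !lt_min => /andP[y1 y2] /andP[z1 z2].
have [->|yz] := eqVneq y z.
  by rewrite subrr !linear0 addr0 !normr0 mulr0.
have nz : 0 < `|y - z| by rewrite normr_gt0 subr_eq0.
have A1 := Hd1 _ _ Fy Fz yz y1 z1.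
have A2 := Hd2 _ _ Fy Fz yz y2 z2.
rewrite ltr_pdivrMr // in A1; rewrite ltr_pdivrMr // in A2.
have -> : L1 (y - z) - L2 (y - z) =
  (f y - f z - L2 (y - z)) - (f y - f z - L1 (y - z)).
  by rewrite opprB [RHS]addrC [RHS]addrA subrK.
apply: le_trans (ler_normB _ _) _.
rewrite [e]splitr mulrDl; apply: ltW; rewrite addrC; exact: ltrD.
Qed.
Lemma ptg0 (R : realType) (n : nat) (Y : normedModType R)
  (F : set 'rV[R]_n) (x : 'rV[R]_n) (f : 'rV[R]_n -> Y)
  (L1 L2 : {linear 'rV[R]_n -> Y}) :
  der F x -> rel_strict_deriv F f x L1 -> rel_strict_deriv F f x L2 ->
  forall v, Ptg F x v -> L1 v = L2 v.
Proof.
move=> dx D1 D2 v [xs [ys [a [Fx Fy cx cy cu]]]].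
have [C C0 HC] := @lin_lip _ _ _ L1 L2.
set K := `|v| + 1 + C.
have K0 : 0 < K by have := normr_ge0 v; rewrite /K; lra.
suff H : forall e, 0 < e -> e <= 1 -> `|L1 v - L2 v| <= e * K.
  apply/eqP; rewrite -subr_eq0 -normr_le0; apply/ler_addgt0Pr => e' e'0.
  rewrite add0r.
  have eK0 : 0 < Num.min 1 (e' / K) by rewrite lt_min ltr01 divr_gt0.
  apply: le_trans (H _ eK0 (_ : _ <= 1)) _.
      by rewrite ge_min lexx.
  by rewrite -ler_pdivlMr // ge_min lexx orbT.
move=> e e0 e1.
have [d d0 Hd] := @key _ _ _ _ _ _ _ _ dx D1 D2 _ e0.
move/cvgrPdist_lt : cx => /(_ _ d0) cx.
move/cvgrPdist_lt : cy => /(_ _ d0) cy.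
move/cvgrPdist_lt : cu => /(_ _ e0) cu.
have [k [hx [hy hu]]] := filter_ex (filterI cx (filterI cy cu)).
rewrite distrC in hx; rewrite distrC in hy.
have B := Hd _ _ (Fy k) (Fx k) hy hx.
have := HC v (a k *: (ys k - xs k)).
rewrite [L1 (_ *: _)]linearZ [L2 (_ *: _)]linearZ /= -scalerBr => Hl.
have E1 : `|L1 v - L2 v| <= `|a k| * `|L1 (ys k - xs k) - L2 (ys k - xs k)|
   + C * `|v - a k *: (ys k - xs k)|.
  rewrite -normrZ; apply: le_trans (lerD (lexx _) Hl).
  by rewrite -[X in `|X|](subrK (a k *: (L1 (ys k - xs k) - L2 (ys k - xs k))))
     addrC ler_normD.
apply: le_trans E1 _.
have hu' : `|v - a k *: (ys k - xs k)| <= e by apply: ltW.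
have Hu : `|a k *: (ys k - xs k)| <= `|v| + e.
  rewrite -[X in `|X|](subrK v) addrC.
  apply: le_trans (ler_normD _ _) _; rewrite lerD2l -normrN opprB //.
apply: le_trans (lerD (ler_wpM2l (normr_ge0 _) B) (ler_wpM2l C0 hu')) _.
rewrite mulrCA -normrZ.
apply: le_trans (lerD (ler_wpM2l (ltW e0) Hu) (lexx _)) _.
rewrite /K; nra.
Qed.

Theorem lemmaB2 (R : realType) (n : nat) (Y : normedModType R)
  (F : set 'rV[R]_n) (x : 'rV[R]_n) (f : 'rV[R]_n -> Y)
  (L1 L2 : {linear 'rV[R]_n -> Y}) :
  F x -> der F x -> spans (Ptg F x) ->
  rel_strict_deriv F f x L1 -> rel_strict_deriv F f x L2 ->
  forall v, L1 v = L2 v.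
Proof.
move=> _ dx sp D1 D2 w.
have [m [c [v [Pv ->]]]] := sp w.
rewrite !linear_sum; apply: eq_bigr => i _.
by rewrite !linearZ /= (@ptg0 _ _ _ _ _ _ _ _ dx D1 D2 _ (Pv i)).
Qed.
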